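(* Assume each $f_i$ is $\mu$-strongly convex with $\mu>0$ and has $L$-Lipschitz gradient, let $x^*$ be the minimiser of $F=f+h$, and run SAGA with step size $\gamma=\frac{1}{3L}$ starting from $x^0$ with $\phi_i^0=x^0$ for all $i$. Then for all $k\ge 0$, \[ \mathbb{E}\Vert x^{k}-x^{*}\Vert^{2}\leq \left( 1-\min\left\{ \frac{1}{4n},\frac{\mu}{3L}\right\} \right)^{k} \left[\Vert x^{0}-x^{*}\Vert^{2} +\frac{2n}{3L} \left[f(x^{0}) -\langle f'(x^{*}),x^{0}-x^{*}\rangle -f(x^{*})\right]\right], \] where the expectation is over all random index choices up to step $k$.
   Context: Setting: $f(x)=\frac1n\sum_{i=1}^n f_i(x)$ with each $f_i\colon\mathbb{R}^d\to\mathbb{R}$ convex and differentiable with $L$-Lipschitz gradient $f_i'$; $h\colon\mathbb{R}^d\to\mathbb{R}\cup\{+\infty\}$ is proper, closed, convex; $F=f+h$. The proximal operator is $\mathrm{prox}^h_\gamma(y)=\operatorname{argmin}_{x}\{h(x)+\frac{1}{2\gamma}\Vert x-y\Vert^2\}$. SAGA algorithm with step size $\gamma>0$: start from $x^0\in\mathbb{R}^d$ and $\phi_i^0=x^0$ for all $i$. At iteration $k+1$, given $x^k$ and $\phi_1^k,\dots,\phi_n^k$: pick $j$ uniformly at random from $\{1,\dots,n\}$ (independently of the past); set $\phi_j^{k+1}=x^k$ and $\phi_i^{k+1}=\phi_i^k$ for $i\neq j$; set $w^{k+1}=x^k-\gamma\big[f_j'(\phi_j^{k+1})-f_j'(\phi_j^k)+\frac1n\sum_{i=1}^n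 f_i'(\phi_i^k)\big]$ and $x^{k+1}=\mathrm{prox}^h_\gamma(w^{k+1})$. *)

(* Defs.v *)
From mathcomp Require Import all_boot.
From Stdlib Require Import Reals ClassicalEpsilon.
Set Implicit Arguments. Unset Strict Implicit. Unset Printing Implicit Defensive.
Local Open Scope R_scope.

Definition rsum (I : finType) (F : I -> R) : R := \big[Rplus/R0]_(i : I) F i.

Definition vec (d : nat) := 'I_d -> R.
Definition vadd d (x y : vec d) : vec d := fun c => x c + y c.
Definition vsub d (x y : vec d) : vec d := fun c => x c - y c.
Definition vscal d (a : R) (x : vec d) : vec d := fun c => a * x c.
Definition vsum d (I : finType) (F : I -> vec d) : vec d := fun c => rsum (fun i => F i c).
Definition inner d (x y : vec d) : R := rsum (fun c : 'I_d => x c * y c).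
Definition nsq d (x : vec d) : R := inner x x.
Definition vnorm d (x : vec d) : R := sqrt (nsq x).

Definition is_gradient d (f : vec d -> R) (g : vec d -> vec d) : Prop :=
  forall x eps, 0 < eps -> exists delta, 0 < delta /\
    forall v : vec d, vnorm v < delta ->
      Rabs (f (vadd x v) - f x - inner (g x) v) <= eps * vnorm v.

Definition convex_fun d (f : vec d -> R) : Prop :=
  forall x y t, 0 <= t <= 1 ->
    f (vadd (vscal t x) (vscal (1 - t) y)) <= t * f x + (1 - t) * f y.

Definition strongly_convex d (mu : R) (f : vec d -> R) : Prop :=
  forall x y t, 0 <= t <= 1 ->
    f (vadd (vscal t x) (vscal (1 - t) y))
      <= t * f x + (1 - t) * f y - mu / 2 * t * (1 - t) * nsq (vsub x y).

Definition lipschitz_grad d (L : R) (g : vec d -> vec d) : Prop :=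
  forall x y, vnorm (vsub (g x) (g y)) <= L * vnorm (vsub x y).

Inductive ereal := EFin of R | EPInf.
Definition ele (a b : ereal) : Prop :=
  match a, b with
  | EFin x, EFin y => x <= y
  | _, EPInf => True
  | EPInf, EFin _ => False
  end.
Definition eadd (a b : ereal) : ereal :=
  match a, b with EFin x, EFin y => EFin (x + y) | _, _ => EPInf end.
(* scaling by a positive real *)
Definition escal (t : R) (a : ereal) : ereal :=
  match a with EFin x => EFin (t * x) | EPInf => EPInf end.
Definition ltRe (r : R) (a : ereal) : Prop :=
  match a with EFin x => r < x | EPInf => True end.

Definition proper_fun d (h : vec d -> ereal) : Prop := exists x, h x <> EPInf.
Definition closed_fun d (h : vec d -> ereal) : Prop :=
  forall x r, ltRe r (h x) -> exists delta, 0 < delta /\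
    forall y, vnorm (vsub y x) < delta -> ltRe r (h y).
Definition convex_efun d (h : vec d -> ereal) : Prop :=
  forall x y t, 0 < t < 1 ->
    ele (h (vadd (vscal t x) (vscal (1 - t) y)))
        (eadd (escal t (h x)) (escal (1 - t) (h y))).

Definition is_prox d (h : vec d -> ereal) (gamma : R) (y x : vec d) : Prop :=
  forall z, ele (eadd (h x) (EFin (/ (2 * gamma) * nsq (vsub x y))))
                (eadd (h z) (EFin (/ (2 * gamma) * nsq (vsub z y)))).
Definition prox d (h : vec d -> ereal) (gamma : R) (y : vec d) : vec d :=
  epsilon (inhabits y) (is_prox h gamma y).

Definition favg n d (fs : 'I_n -> vec d -> R) (x : vec d) : R :=
  / INR n * rsum (fun i => fs i x).
Definition gavg n d (g : 'I_n -> vec d -> vec d) (x : vec d) : vec d :=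
  vscal (/ INR n) (vsum (fun i => g i x)).

Definition saga_step n d (g : 'I_n -> vec d -> vec d) (h : vec d -> ereal)
  (gamma : R) (s : vec d * ('I_n -> vec d)) (j : 'I_n) : vec d * ('I_n -> vec d) :=
  let x := s.1 in
  let phi := s.2 in
  let phi' := fun i => if i == j then x else phi i in
  let avg := vscal (/ INR n) (vsum (fun i => g i (phi i))) in
  let w := vsub x (vscal gamma (vadd (vsub (g j (phi' j)) (g j (phi j))) avg)) in
  (prox h gamma w, phi').

Definition saga_run n d (g : 'I_n -> vec d -> vec d) (h : vec d -> ereal)
  (gamma : R) (x0 : vec d) (js : seq 'I_n) : vec d * ('I_n -> vec d) :=
  foldl (saga_step g h gamma) (x0, fun _ => x0) js.

(* expectation over k independent uniform indices in {1..n} *)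
Definition expect_k (n k : nat) (X : seq 'I_n -> R) : R :=
  / (INR n ^ k) * rsum (fun js : k.-tuple 'I_n => X (tval js)).

(* Main.v *)
Require Import Defs.
From HB Require Import structures.
From mathcomp Require Import all_boot.
From Stdlib Require Import Reals Lra Psatz Lia Classical ClassicalEpsilon FunctionalExtensionality.
Local Open Scope R_scope.
Set Implicit Arguments. Unset Strict Implicit.

Lemma Rplus_assoc' : associative Rplus. Proof. move=> *; ring. Qed.
Lemma Rmult_assoc' : associative Rmult. Proof. move=> *; ring. Qed.
HB.instance Definition _ := Monoid.isComLaw.Build R R0 Rplus Rplus_assoc' Rplus_comm Rplus_0_l.
HB.instance Definition _ := Monoid.isComLaw.Build R R1 Rmult Rmult_assoc' Rmult_comm Rmult_1_l.
HB.instance Definition _ := Monoid.isMulLaw.Build R R0 Rmult Rmult_0_l Rmult_0_r.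
HB.instance Definition _ := Monoid.isAddLaw.Build R Rmult Rplus Rmult_plus_distr_r Rmult_plus_distr_l.

Section RS.
Variable I : finType.
Implicit Types F G : I -> R.
Lemma rsum_add F G : rsum (fun i => F i + G i) = rsum F + rsum G.
Proof. by rewrite /rsum big_split. Qed.
Lemma rsum_scal a F : rsum (fun i => a * F i) = a * rsum F.
Proof. by rewrite /rsum big_distrr. Qed.
Lemma rsum_ext F G : (forall i, F i = G i) -> rsum F = rsum G.
Proof. by move=> H; rewrite /rsum; apply: eq_bigr => i _. Qed.
Lemma rsum_opp F : rsum (fun i => - F i) = - rsum F.
Proof. rewrite (_ : - rsum F = (-1) * rsum F); last ring.
  rewrite -rsum_scal; by apply: rsum_ext => i; ring. Qed.
Lemma rsum_sub F G : rsum (fun i => F i - G i) = rsum F - rsum G.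
Proof. by rewrite /Rminus -rsum_opp -rsum_add. Qed.
Lemma rsum_scalr a F : rsum (fun i => F i * a) = rsum F * a.
Proof. rewrite Rmult_comm -rsum_scal; apply: rsum_ext => i; ring. Qed.
Lemma rsum_le F G : (forall i, F i <= G i) -> rsum F <= rsum G.
Proof.
move=> H; rewrite /rsum; apply: (big_ind2 (fun a b => a <= b)).
- lra.
- move=> *; lra.
- by move=> i _.
Qed.
Lemma rsum_ge0 F : (forall i, 0 <= F i) -> 0 <= rsum F.
Proof.
move=> H; rewrite /rsum; apply: (big_ind (fun a => 0 <= a)) => //.
- lra.
- move=> *; lra.
Qed.
Lemma rsum_term F j : (forall i, 0 <= F i) -> F j <= rsum F.
Proof.
move=> H; rewrite /rsum (bigD1 j) //=.
have : 0 <= \big[Rplus/R0]_(i | i != j) F i.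
  apply: (big_ind (fun a => 0 <= a)) => //; [lra| move=> *; lra].
lra.
Qed.
End RS.

Lemma rsum_exchange (I J : finType) (F : I -> J -> R) :
  rsum (fun i => rsum (fun j => F i j)) = rsum (fun j => rsum (fun i => F i j)).
Proof. by rewrite /rsum exchange_big. Qed.

Lemma rsum_const n a : rsum (fun _ : 'I_n => a) = INR n * a.
Proof.
rewrite /rsum big_const_ord; elim: n => [|n IH]; first (simpl; ring).
rewrite [iter _ _ _]/= IH S_INR; ring.
Qed.

Lemma rsum_ord0 (F : 'I_0 -> R) : rsum F = 0.
Proof. by rewrite /rsum big_ord0. Qed.

Section Vec.
Variable d : nat.
Implicit Types x y z u v w : vec d.

Lemma vec_ext x y : (forall c, x c = y c) -> x = y.
Proof. move=> H; apply: functional_extensionality => c; exact: H. Qed.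

Lemma inner_sym x y : inner x y = inner y x.
Proof. rewrite /inner; apply: rsum_ext => c; ring. Qed.
Lemma inner_addl x y z : inner (vadd x y) z = inner x z + inner y z.
Proof. rewrite /inner -rsum_add; apply: rsum_ext => c; rewrite /vadd; ring. Qed.
Lemma inner_addr x y z : inner z (vadd x y) = inner z x + inner z y.
Proof. rewrite /inner -rsum_add; apply: rsum_ext => c; rewrite /vadd; ring. Qed.
Lemma inner_subl x y z : inner (vsub x y) z = inner x z - inner y z.
Proof. rewrite /inner -rsum_sub; apply: rsum_ext => c; rewrite /vsub; ring. Qed.
Lemma inner_subr x y z : inner z (vsub x y) = inner z x - inner z y.
Proof. rewrite /inner -rsum_sub; apply: rsum_ext => c; rewrite /vsub; ring. Qed.
Lemma inner_scall a x z : inner (vscal a x) z = a * inner x z.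
Proof. rewrite /inner -rsum_scal; apply: rsum_ext => c; rewrite /vscal; ring. Qed.
Lemma inner_scalr a x z : inner z (vscal a x) = a * inner z x.
Proof. rewrite /inner -rsum_scal; apply: rsum_ext => c; rewrite /vscal; ring. Qed.
Lemma inner_suml (I : finType) (F : I -> vec d) z :
  inner (vsum F) z = rsum (fun i => inner (F i) z).
Proof.
rewrite /inner /vsum rsum_exchange; apply: rsum_ext => c; rewrite -rsum_scalr //.
Qed.
Lemma inner_sumr (I : finType) (F : I -> vec d) z :
  inner z (vsum F) = rsum (fun i => inner z (F i)).
Proof. rewrite inner_sym inner_suml; apply: rsum_ext => i; exact: inner_sym. Qed.

Lemma nsq_ge0 x : 0 <= nsq x.
Proof. rewrite /nsq /inner; apply: rsum_ge0 => c; nra. Qed.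

Lemma inner_bound x y s : 0 < s -> 2 * inner x y <= s * nsq x + nsq y / s.
Proof.
move=> hs.
have H := nsq_ge0 (vsub (vscal s x) y).
move: H; rewrite /nsq !(inner_subl, inner_subr, inner_scall, inner_scalr).
rewrite (inner_sym y x) => H.
have : 0 <= (s * (s * inner x x) - s * inner x y - (s * inner x y - inner y y)) / s.
  apply: Rmult_le_pos; [lra| apply: Rlt_le; apply: Rinv_0_lt_compat; lra].
move=> H2. have E : (s * (s * inner x x) - s * inner x y - (s * inner x y - inner y y)) / s
   = s * inner x x - 2 * inner x y + inner y y / s by field; lra.
lra.
Qed.

Lemma inner_half x y : 2 * inner x y <= nsq x + nsq y.
Proof. have := inner_bound x y Rlt_0_1. rewrite Rmult_1_l /Rdiv Rinv_1 Rmult_1_r //. Qed.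

Lemma cauchy_schwarz x y : inner x y <= vnorm x * vnorm y.
Proof.
rewrite /vnorm -sqrt_mult; try exact: nsq_ge0.
case: (Rle_lt_dec (inner x y) 0) => H.
  apply: Rle_trans H (sqrt_pos _).
rewrite -(sqrt_square (inner x y)); last lra.
apply: sqrt_le_1; [nra| apply: Rmult_le_pos; exact: nsq_ge0|].
have hy := nsq_ge0 y.
case: (Rle_lt_dec (nsq y) 0) => hy0.
-
  have hy' : nsq y = 0 by lra.
  exfalso.
  have hx := nsq_ge0 x.
  have hp : 0 < inner x y / (nsq x + 1) by apply: Rmult_lt_0_compat; [|apply: Rinv_0_lt_compat]; lra.
  have := inner_bound x y hp.
  rewrite hy' /Rdiv Rmult_0_l Rplus_0_r => HH.
  have E : inner x y * / (nsq x + 1) * nsq x = inner x y * (nsq x / (nsq x + 1)) by rewrite /Rdiv; ring.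
  have hq : nsq x / (nsq x + 1) < 1.
    apply/(Rmult_lt_reg_r (nsq x + 1)); first lra.
    rewrite /Rdiv Rmult_assoc Rinv_l; lra.
  nra.
- have := nsq_ge0 (vsub x (vscal (inner x y / nsq y) y)).
  rewrite /nsq !(inner_subl, inner_subr, inner_scall, inner_scalr).
  rewrite (inner_sym y x) -/(nsq y) -/(nsq x).
  move: H hy hy0.
  set a := inner x y; set b := nsq y; set c := nsq x; clearbody a b c => H hy hy0 H0.
  have Ht : a / b * b = a by field; lra.
  have E : c - a / b * a - (a / b * a - a / b * (a / b * b)) = c - a / b * a by rewrite Ht; ring.
  rewrite E in H0.
  have : 0 <= b * (c - a / b * a) by apply: Rmult_le_pos; lra.
  have -> : b * (c - a / b * a) = c * b - a * a by field; lra.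
  lra.
Qed.
End Vec.

Lemma Rabs_le_between a b : Rabs a <= b -> - b <= a <= b.
Proof. move=> H; have := Rle_abs a; have := Rle_abs (- a); rewrite Rabs_Ropp; lra. Qed.

Lemma lim0 K C : (forall eps, 0 < eps -> exists s0, 0 < s0 /\ forall s, 0 < s < s0 -> K <= eps + s * C) -> K <= 0.
Proof.
move=> H; apply: Rnot_lt_le => hK.
have [s0 [hs0 Hs]] := H (K / 2) ltac:(lra).
set s := Rmin (s0 / 2) (K / (2 * (Rabs C + 1))).
have hC : 0 < Rabs C + 1 by have := Rabs_pos C; lra.
have hs1 : 0 < s.
  apply: Rmin_pos; first lra.
  apply: Rmult_lt_0_compat; [lra|apply: Rinv_0_lt_compat; lra].
have hs2 : s < s0 by have := Rmin_l (s0/2) (K / (2 * (Rabs C + 1))); rewrite -/s; lra.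
have hs3 : s <= K / (2 * (Rabs C + 1)) by exact: Rmin_r.
have := Hs s (conj hs1 hs2).
have : s * C <= s * Rabs C by apply: Rmult_le_compat_l; [lra| exact: Rle_abs].
have : s * (Rabs C + 1) <= K / 2.
  have -> : K / 2 = K / (2 * (Rabs C + 1)) * (Rabs C + 1) by field; lra.
  apply: Rmult_le_compat_r; lra.
nra.
Qed.

Lemma le_small a b c : (forall t, 0 < t < 1 -> a <= b + t * c) -> a <= b.
Proof.
move=> H.
suff : a - b <= 0 by lra.
apply: (lim0 (C := c)) => eps heps; exists 1; split; first lra.
move=> s hs; have := H s hs; lra.
Qed.

Section Anal.
Variable d : nat.
Implicit Types x y z u v w a b : vec d.

Lemma nsq_scal t v : nsq (vscal t v) = t * t * nsq v.
Proof. rewrite /nsq inner_scall inner_scalr; ring. Qed.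

Lemma vnorm_scal t v : vnorm (vscal t v) = Rabs t * vnorm v.
Proof.
rewrite /vnorm nsq_scal sqrt_mult; [|nra|exact: nsq_ge0].
by rewrite -/(Rsqr t) sqrt_Rsqr_abs.
Qed.

Lemma vnorm_ge0 v : 0 <= vnorm v.
Proof. exact: sqrt_pos. Qed.

Variable f : vec d -> R.
Variable gf : vec d -> vec d.
Hypothesis Hg : is_gradient f gf.

Lemma deriv_line a v t :
  derivable_pt_lim (fun s => f (vadd a (vscal s v))) t (inner (gf (vadd a (vscal t v))) v).
Proof.
move=> eps heps.
set p := vadd a (vscal t v).
have hv := vnorm_ge0 v.
have he : 0 < eps / 2 / (vnorm v + 1).
  apply: Rmult_lt_0_compat; [lra|apply: Rinv_0_lt_compat; lra].
have [del [hdel Hd]] := Hg p he.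
have hdd : 0 < del / (vnorm v + 1) by apply: Rmult_lt_0_compat; [lra|apply: Rinv_0_lt_compat; lra].
exists (mkposreal _ hdd) => hh hh0 /= hhl.
have Ep : vadd a (vscal (t + hh) v) = vadd p (vscal hh v).
  apply: vec_ext => c; rewrite /p /vadd /vscal; ring.
rewrite Ep.
have hn : vnorm (vscal hh v) < del.
  rewrite vnorm_scal.
  have hah := Rabs_pos hh.
  have : Rabs hh * (vnorm v + 1) < del.
    have -> : del = del / (vnorm v + 1) * (vnorm v + 1) by field; lra.
    apply: Rmult_lt_compat_r; lra.
  nra.
have := Hd _ hn; rewrite inner_scalr vnorm_scal => H1.
have hah : 0 < Rabs hh by apply: Rabs_pos_lt.
have E : (f (vadd p (vscal hh v)) - f p) / hh - inner (gf p) v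
       = (f (vadd p (vscal hh v)) - f p - hh * inner (gf p) v) / hh by field.
rewrite E /Rdiv Rabs_mult Rabs_inv.
apply/(Rmult_lt_reg_r (Rabs hh)) => //.
rewrite Rmult_assoc Rinv_l; last lra.
rewrite Rmult_1_r.
have : eps / 2 / (vnorm v + 1) * (Rabs hh * vnorm v) <= eps / 2 * Rabs hh.
  have -> : eps / 2 / (vnorm v + 1) * (Rabs hh * vnorm v) = eps / 2 * Rabs hh * (vnorm v / (vnorm v + 1)) by field; lra.
  have : vnorm v / (vnorm v + 1) <= 1.
    apply/(Rmult_le_reg_r (vnorm v + 1)); first lra.
    rewrite /Rdiv Rmult_assoc Rinv_l; lra.
  have : 0 <= eps / 2 * Rabs hh by nra.
  nra.
nra.
Qed.

Variable L : R.
Hypothesis HL : lipschitz_grad L gf.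
Hypothesis HL0 : 0 <= L.

Lemma descent x y : f y <= f x + inner (gf x) (vsub y x) + L / 2 * nsq (vsub y x).
Proof.
set v := vsub y x.
set psi := fun s => f (vadd x (vscal s v)) - s * inner (gf x) v - L / 2 * (s * s) * nsq v.
have Hd : forall s, derivable_pt_lim psi s
   (inner (gf (vadd x (vscal s v))) v - 1 * inner (gf x) v - 2 * s * (L / 2 * nsq v)).
  move=> s.
  have D1 := deriv_line x v s.
  have D2 := derivable_pt_lim_scal_right id s 1 (inner (gf x) v) (derivable_pt_lim_id s).
  have D3 := derivable_pt_lim_scal_right Rsqr s (2 * s) (L / 2 * nsq v) (derivable_pt_lim_Rsqr s).
  have := derivable_pt_lim_minus _ _ _ _ _ (derivable_pt_lim_minus _ _ _ _ _ D1 D2) D3.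
  apply: derivable_pt_lim_ext => z.
  rewrite /minus_fct /id /Rsqr /psi; ring.
have [c [Ec hc]] := MVT_cor2 psi _ 0 1 Rlt_0_1 (fun c _ => Hd c).
have H0 : psi 0 = f x.
  rewrite /psi (_ : vadd x (vscal 0 v) = x); first ring.
  apply: vec_ext => i; rewrite /vadd /vscal; ring.
have H1 : psi 1 = f y - inner (gf x) v - L / 2 * nsq v.
  rewrite /psi (_ : vadd x (vscal 1 v) = y); first ring.
  apply: vec_ext => i; rewrite /v /vadd /vscal /vsub; ring.
have Hneg : inner (gf (vadd x (vscal c v))) v - 1 * inner (gf x) v - 2 * c * (L / 2 * nsq v) <= 0.
  have E : inner (gf (vadd x (vscal c v))) v - 1 * inner (gf x) v
         = inner (vsub (gf (vadd x (vscal c v))) (gf x)) v by rewrite inner_subl; ring.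
  rewrite E.
  have CS := cauchy_schwarz (vsub (gf (vadd x (vscal c v))) (gf x)) v.
  have Lp := HL (vadd x (vscal c v)) x.
  have Ev : vsub (vadd x (vscal c v)) x = vscal c v.
    apply: vec_ext => i; rewrite /vadd /vscal /vsub; ring.
  rewrite Ev vnorm_scal Rabs_pos_eq in Lp; last lra.
  have hv := vnorm_ge0 v.
  have Env : nsq v = vnorm v * vnorm v.
    rewrite /vnorm sqrt_sqrt //; exact: nsq_ge0.
  have := vnorm_ge0 (vsub (gf (vadd x (vscal c v))) (gf x)).
  rewrite Env; nra.
rewrite H0 H1 in Ec.
have : f y - inner (gf x) v - L / 2 * nsq v - f x <= 0 by rewrite Ec; nra.
lra.
Qed.

Variable mu : R.
Hypothesis Hsc : strongly_convex mu f.

Lemma sc_first x y : f x + inner (gf x) (vsub y x) + mu / 2 * nsq (vsub y x) <= f y.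
Proof.
set v := vsub y x.
suff : f x + inner (gf x) v + mu / 2 * nsq v - f y <= 0 by lra.
apply: (lim0 (C := mu / 2 * nsq v)) => eps heps.
have hv := vnorm_ge0 v.
have he : 0 < eps / (vnorm v + 1) by apply: Rmult_lt_0_compat; [lra|apply: Rinv_0_lt_compat; lra].
have [del [hdel Hd]] := Hg x he.
exists (Rmin 1 (del / (vnorm v + 1))); split.
  apply: Rmin_pos; first lra. apply: Rmult_lt_0_compat; [lra|apply: Rinv_0_lt_compat; lra].
move=> s [hs0 hs1].
have hs1a : s < 1 by have := Rmin_l 1 (del / (vnorm v + 1)); lra.
have hs1b : s < del / (vnorm v + 1) by have := Rmin_r 1 (del / (vnorm v + 1)); lra.
have hn : vnorm (vscal s v) < del.
  rewrite vnorm_scal Rabs_pos_eq; last lra.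
  have : s * (vnorm v + 1) < del.
    have -> : del = del / (vnorm v + 1) * (vnorm v + 1) by field; lra.
    apply: Rmult_lt_compat_r; lra.
  nra.
have := Hd _ hn; rewrite inner_scalr vnorm_scal (Rabs_pos_eq s); last lra.
move=> /Rabs_le_between [H1 _].
have Hc := Hsc y x (conj (Rlt_le _ _ hs0) (Rlt_le _ _ hs1a)).
have E : vadd (vscal s y) (vscal (1 - s) x) = vadd x (vscal s v).
  apply: vec_ext => i; rewrite /v /vadd /vscal /vsub; ring.
rewrite E -/v in Hc.
have Evv : vsub y x = v by [].
have K : s * (f x + inner (gf x) v + mu / 2 * nsq v - f y) <= s * (eps + s * (mu / 2 * nsq v)).
  have : eps / (vnorm v + 1) * (s * vnorm v) <= s * eps.
    have -> : eps / (vnorm v + 1) * (s * vnorm v) = s * eps * (vnorm v / (vnorm v + 1)) by field; lra.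
    have : vnorm v / (vnorm v + 1) <= 1.
      apply/(Rmult_le_reg_r (vnorm v + 1)); first lra.
      rewrite /Rdiv Rmult_assoc Rinv_l; lra.
    have : 0 <= s * eps by nra.
    nra.
  have hnv := nsq_ge0 v.
  nra.
apply: (Rmult_le_reg_l s) => //.
Qed.
End Anal.

Section Coco.
Variable d : nat.
Variable f : vec d -> R.
Variable gf : vec d -> vec d.
Variables (m L : R).
Hypothesis Hsc : forall a b, f b + inner (gf b) (vsub a b) + m / 2 * nsq (vsub a b) <= f a.
Hypothesis Hde : forall a b, f a <= f b + inner (gf b) (vsub a b) + L / 2 * nsq (vsub a b).
Hypothesis Hm : 0 <= m <= L.

Lemma coco a b :
  nsq (vsub (vsub (gf a) (gf b)) (vscal m (vsub a b)))
  <= 2 * (L - m) * (f a - f b - inner (gf b) (vsub a b) - m / 2 * nsq (vsub a b)).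
Proof.
set e := vsub a b.
set u := vsub (vsub (gf a) (gf b)) (vscal m e).
set D := f a - f b - inner (gf b) e - m / 2 * nsq e.
have key : forall t, 0 < t -> t * nsq u - (L - m) * (t * t) / 2 * nsq u <= D.
  move=> t ht.
  set z := vsub a (vscal t u).
  have H1 := Hde z a.
  have H2 := Hsc z b.
  have Eza : vsub z a = vscal (-t) u.
    apply: vec_ext => i; rewrite /z /vsub /vscal; ring.
  have Ezb : vsub z b = vsub e (vscal t u).
    apply: vec_ext => i; rewrite /z /e /vsub /vscal; ring.
  rewrite Eza in H1. rewrite Ezb in H2.
  have Nu : inner u u = inner (gf a) u - inner (gf b) u - m * inner e u.
    by rewrite {1}/u !(inner_subl, inner_scall).
  have ED : D = f a - f b - inner (gf b) e - m / 2 * nsq e by [].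
  rewrite ED. clearbody D z u e.
  move: H1 H2; rewrite /nsq !(inner_subl, inner_subr, inner_scall, inner_scalr).
  rewrite (inner_sym u e) => H1 H2.
  have -> : t * inner u u = t * (inner (gf a) u - inner (gf b) u - m * inner e u) by rewrite Nu.
  nra.
have hu := nsq_ge0 u.
case: (Rle_lt_dec L m) => hLm.
- have eLm : L - m = 0 by lra.
  rewrite eLm Rmult_0_r Rmult_0_l.
  have hD : 0 <= D by have := key 1 Rlt_0_1; rewrite eLm; nra.
  case: (Rle_lt_dec (nsq u) 0) => hu0; first lra.
  have := key ((D + 1) / nsq u) ltac:(apply: Rmult_lt_0_compat; [lra|apply: Rinv_0_lt_compat; lra]).
  rewrite eLm.
  have -> : (D + 1) / nsq u * nsq u = D + 1 by field; lra.
  lra.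
- have := key (/ (L - m)) ltac:(apply: Rinv_0_lt_compat; lra).
  have -> : / (L - m) * nsq u - (L - m) * (/ (L - m) * / (L - m)) / 2 * nsq u
          = nsq u / (2 * (L - m)) by field; lra.
  move=> H.
  have : nsq u / (2 * (L - m)) * (2 * (L - m)) <= D * (2 * (L - m)).
    apply: Rmult_le_compat_r; lra.
  have -> : nsq u / (2 * (L - m)) * (2 * (L - m)) = nsq u by field; lra.
  lra.
Qed.
End Coco.

Section Prox1.
Variable d : nat.
Implicit Types x y z u v w p : vec d.

Lemma nsq_sub_sym x y : nsq (vsub x y) = nsq (vsub y x).
Proof. rewrite /nsq /inner; apply: rsum_ext => c; rewrite /vsub; ring. Qed.

Lemma nsq_add x y : nsq (vadd x y) = nsq x + 2 * inner x y + nsq y.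
Proof. rewrite /nsq /inner -rsum_scal -!rsum_add; apply: rsum_ext => c; rewrite /vadd; ring. Qed.

Lemma nsq_add_le x y : nsq (vadd x y) <= 2 * nsq x + 2 * nsq y.
Proof. rewrite nsq_add; have := inner_half x y; lra. Qed.

Variable h : vec d -> ereal.
Variable gam : R.
Hypothesis Hgam : 0 < gam.
Hypothesis Hprop : proper_fun h.
Hypothesis Hconv : convex_efun h.

Lemma prox_fin w p : is_prox h gam w p -> exists hp, h p = EFin hp.
Proof.
move=> Hp; case: Hprop => x1 hx1.
have := Hp x1; case E: (h x1) => [a|] //; case: (h p) => [b|] //= _.
by exists b.
Qed.

Lemma prox_var w p : is_prox h gam w p ->
  exists hp, h p = EFin hp /\
    forall z r, h z = EFin r -> hp - r <= / gam * inner (vsub p w) (vsub z p).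
Proof.
move=> Hp; have [hp Ehp] := prox_fin Hp.
exists hp; split => // z r Ez.
apply: (le_small (c := / (2 * gam) * nsq (vsub z p))) => t ht.
set zt := vadd (vscal t z) (vscal (1 - t) p).
have Hc := Hconv z p ht; rewrite Ez Ehp /= in Hc.
move: Hc; rewrite -/zt; case Ezt: (h zt) => [rt|] //= Hrt.
have := Hp zt; rewrite Ehp Ezt /= => Hm.
have Ev : vsub zt w = vadd (vsub p w) (vscal t (vsub z p)).
  apply: vec_ext => c; rewrite /zt /vadd /vsub /vscal; ring.
rewrite Ev nsq_add inner_scalr nsq_scal in Hm.
have Hg1 : 0 < / gam by apply: Rinv_0_lt_compat.
have E2 : / (2 * gam) = / 2 * / gam by rewrite Rinv_mult.
rewrite E2 in Hm *.
set I := inner (vsub p w) (vsub z p) in Hm *.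
set N := nsq (vsub z p) in Hm *.
have K : t * (hp - r) <= t * (/ gam * I + t * (/ 2 * / gam * N)) by nra.
apply: (Rmult_le_reg_l t); lra.
Qed.

Lemma prox_nonexp w1 w2 p1 p2 : is_prox h gam w1 p1 -> is_prox h gam w2 p2 ->
  nsq (vsub p1 p2) <= nsq (vsub w1 w2).
Proof.
move=> H1 H2.
have [a [Ea Va]] := prox_var H1.
have [b [Eb Vb]] := prox_var H2.
have A1 := Va p2 b Eb.
have A2 := Vb p1 a Ea.
have S : 0 <= / gam * (inner (vsub p1 w1) (vsub p2 p1) + inner (vsub p2 w2) (vsub p1 p2)) by lra.
have S2 : 0 <= inner (vsub p1 w1) (vsub p2 p1) + inner (vsub p2 w2) (vsub p1 p2).
  have Hg1 : 0 < / gam by apply: Rinv_0_lt_compat.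
  nra.
have E : inner (vsub p1 w1) (vsub p2 p1) + inner (vsub p2 w2) (vsub p1 p2)
       = inner (vsub w1 w2) (vsub p1 p2) - nsq (vsub p1 p2).
  rewrite /nsq /inner -rsum_add -rsum_sub; apply: rsum_ext => c; rewrite /vsub; ring.
have := inner_half (vsub w1 w2) (vsub p1 p2).
lra.
Qed.
End Prox1.

Lemma inv_succ_small eps : 0 < eps -> exists N : nat, forall k : nat, (N <= k)%coq_nat -> / (INR k + 1) < eps.
Proof.
move=> he; have [N [HN HN0]] := archimed_cor1 eps he.
exists N => k hk.
have hN : 0 < INR N by apply: lt_0_INR.
have : INR N <= INR k by apply: le_INR.
move=> hk'.
apply: Rle_lt_trans HN.
apply: Rinv_le_contravar => //; lra.
Qed.

Lemma cv_inv_succ : Un_cv (fun k => / (INR k + 1)) 0.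
Proof.
move=> eps he; have [N HN] := inv_succ_small he.
exists N => k hk; rewrite /Rdist Rminus_0_r Rabs_pos_eq.
  apply: HN; lia.
apply: Rlt_le; apply: Rinv_0_lt_compat; have := pos_INR k; lra.
Qed.

Lemma cv_const K : Un_cv (fun _ => K) K.
Proof. move=> eps he; exists 0%nat => k _; rewrite /Rdist Rminus_diag Rabs_R0 //. Qed.

Lemma cv_rsum (I : finType) (F : nat -> I -> R) (G : I -> R) :
  (forall i, Un_cv (fun k => F k i) (G i)) -> Un_cv (fun k => rsum (F k)) (rsum G).
Proof.
move=> H; rewrite /rsum.
elim: (index_enum I) => [|i s IH].
  rewrite big_nil; apply: (Un_cv_ext (fun _ => 0)); last exact: cv_const.
  by move=> k; rewrite big_nil.
rewrite big_cons; apply: (Un_cv_ext (fun k => F k i + \big[Rplus/R0]_(j <- s) F k j)).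
  by move=> k; rewrite big_cons.
exact: CV_plus.
Qed.

Section ProxEx.
Variable d : nat.
Implicit Types x y z u v p : vec d.
Variable h : vec d -> ereal.
Variable gam : R.
Hypothesis Hgam : 0 < gam.
Hypothesis Hprop : proper_fun h.
Hypothesis Hclos : closed_fun h.
Hypothesis Hconv : convex_efun h.
Variable w : vec d.

Let q z := / (2 * gam) * nsq (vsub z w).

Lemma vnorm_lt_sq v a : 0 < a -> nsq v < a * a -> vnorm v < a.
Proof.
move=> ha hv; rewrite /vnorm -(sqrt_square a); last lra.
apply: sqrt_lt_1 => //; [exact: nsq_ge0| nra].
Qed.

Lemma vnorm_sq v : vnorm v * vnorm v = nsq v.
Proof. rewrite /vnorm sqrt_sqrt //; exact: nsq_ge0. Qed.

Lemma prox_lower : exists C, forall z r, h z = EFin r -> C + nsq (vsub z w) / (4 * gam) <= r + q z.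
Proof.
case: Hprop => x1; case Ex1: (h x1) => [a|] // _.
have HH : ltRe (a - 1) (h x1) by rewrite Ex1 /=; lra.
have [del [hdel Hd]] := Hclos HH.
exists (a - 1 - 8 * gam / (del * del) - nsq (vsub w x1) / (4 * gam)) => z r Ez.
set s1 := vnorm (vsub z x1).
have hs1 : 0 <= s1 by exact: vnorm_ge0.
have Hr : a - 1 - 2 * s1 / del <= r.
  case: (Rlt_le_dec s1 del) => hs.
  - have := Hd z hs; rewrite Ez /= => H.
    have : 0 <= 2 * s1 / del by apply: Rmult_le_pos; [lra|apply: Rlt_le; apply: Rinv_0_lt_compat].
    lra.
  - set t := del / (2 * s1).
    have hs1p : 0 < s1 by lra.
    have ht0 : 0 < t by apply: Rmult_lt_0_compat; [lra|apply: Rinv_0_lt_compat; lra].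
    have ht1 : t < 1.
      apply/(Rmult_lt_reg_r (2 * s1)); first lra.
      rewrite /t /Rdiv Rmult_assoc Rinv_l; lra.
    set y := vadd (vscal t z) (vscal (1 - t) x1).
    have Ey : vsub y x1 = vscal t (vsub z x1).
      apply: vec_ext => c; rewrite /y /vadd /vsub /vscal; ring.
    have hy : vnorm (vsub y x1) < del.
      rewrite Ey vnorm_scal Rabs_pos_eq; last lra.
      rewrite -/s1 /t.
      have -> : del / (2 * s1) * s1 = del / 2 by field; lra.
      lra.
    have := Hd y hy.
    have := Hconv z x1 (conj ht0 ht1); rewrite Ez Ex1 /= -/y.
    case: (h y) => [ry|] //= H1 H2.

    have K : t * (a - 2 * s1 / del) <= t * r.
      have -> : t * (a - 2 * s1 / del) = t * a - 1.
        rewrite /t; field; lra.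
      lra.
    apply: (Rmult_le_reg_l t) => //; lra.
have Hs : 2 * s1 / del <= s1 * s1 / (8 * gam) + 8 * gam / (del * del).
  have E : s1 * s1 / (8 * gam) + 8 * gam / (del * del) - 2 * s1 / del
         = (s1 * del - 8 * gam) * (s1 * del - 8 * gam) / (8 * gam * (del * del)).
    field; repeat split; lra.
  have : 0 <= (s1 * del - 8 * gam) * (s1 * del - 8 * gam) / (8 * gam * (del * del)).
    apply: Rmult_le_pos; first exact: (Rle_0_sqr _).
    apply: Rlt_le; apply: Rinv_0_lt_compat; apply: Rmult_lt_0_compat; [lra| apply: Rmult_lt_0_compat; lra].
  lra.
have Hsq : s1 * s1 <= 2 * nsq (vsub z w) + 2 * nsq (vsub w x1).
  rewrite /s1 vnorm_sq.
  have -> : vsub z x1 = vadd (vsub z w) (vsub w x1).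
    apply: vec_ext => c; rewrite /vadd /vsub; ring.
  exact: nsq_add_le.
rewrite /q.
have E1 : s1 * s1 / (8 * gam) <= nsq (vsub z w) / (4 * gam) + nsq (vsub w x1) / (4 * gam).
  have -> : nsq (vsub z w) / (4 * gam) + nsq (vsub w x1) / (4 * gam)
     = (2 * nsq (vsub z w) + 2 * nsq (vsub w x1)) / (8 * gam) by field; lra.
  apply: Rmult_le_compat_r => //; apply: Rlt_le; apply: Rinv_0_lt_compat; lra.
have -> : / (2 * gam) * nsq (vsub z w) = nsq (vsub z w) / (4 * gam) + nsq (vsub z w) / (4 * gam).
  field; lra.
lra.
Qed.

Lemma mid_nsq a b : nsq (vsub (vadd (vscal (1/2) a) (vscal (1 - 1/2) b)) w)
  = (nsq (vsub a w) + nsq (vsub b w)) / 2 - nsq (vsub a b) / 4.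
Proof.
rewrite /nsq /inner /Rdiv -rsum_add -!rsum_scalr -rsum_sub.
apply: rsum_ext => c; rewrite /vsub /vadd /vscal; field.
Qed.

Lemma prox_exists : exists p, is_prox h gam w p.
Proof.
have [C HC] := prox_lower.
have Hg4 : 0 < 4 * gam by lra.
have Hq4 : forall z, 0 <= nsq (vsub z w) / (4 * gam).
  move=> z; apply: Rmult_le_pos; [exact: nsq_ge0| apply: Rlt_le; apply: Rinv_0_lt_compat; lra].
case: Hprop => x1; case Ex1: (h x1) => [a|] // _.
pose E := fun yy : R => exists z r, h z = EFin r /\ yy = - (r + q z).
have bE : bound E.
  exists (- C); move=> y0 Hy0; case: Hy0 => z [r [Ez Ey0]]; rewrite Ey0.
  have := HC z r Ez; have := Hq4 z; lra.
have neE : exists yy, E yy by exists (- (a + q x1)); exists x1, a.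
have [M [HM1 HM2]] := completeness E bE neE.
pose m := - M.
have Hinf : forall z r, h z = EFin r -> m <= r + q z.
  move=> z r Ez; have := HM1 (- (r + q z)) (ex_intro _ z (ex_intro _ r (conj Ez erefl))).
  rewrite /m; lra.
have Happ : forall eps, 0 < eps -> exists z r, h z = EFin r /\ r + q z < m + eps.
  move=> eps he; apply: NNPP => Hn.
  have : M <= M - eps.
    apply: HM2 => y0 Hy0; case: Hy0 => z [r [Ez Ey0]]; rewrite Ey0.
    case: (Rlt_le_dec (r + q z) (m + eps)) => H.
      by exfalso; apply: Hn; exists z, r.
    rewrite /m in H; lra.
  lra.
have seqx : forall k : nat, {zr : vec d * R | h zr.1 = EFin zr.2 /\ zr.2 + q zr.1 < m + / (INR k + 1)}.
  move=> k; apply: constructive_indefinite_description.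
  have hk : 0 < / (INR k + 1) by apply: Rinv_0_lt_compat; have := pos_INR k; lra.
  have [z [r [Ez Hz]]] := Happ _ hk.
  by exists (z, r).
pose zs := fun k => (proj1_sig (seqx k)).1.
pose rs := fun k => (proj1_sig (seqx k)).2.
have Hzs : forall k, h (zs k) = EFin (rs k) /\ rs k + q (zs k) < m + / (INR k + 1).
  move=> k; exact: (proj2_sig (seqx k)).
have Hcb : forall k l, nsq (vsub (zs k) (zs l)) <= 4 * gam * (/ (INR k + 1) + / (INR l + 1)).
  move=> k l.
  have [Ek Hk] := Hzs k; have [El Hl] := Hzs l.
  have ht : 0 < 1 / 2 < 1 by lra.
  have := Hconv (zs k) (zs l) ht; rewrite Ek El /=.
  case Ey: (h _) => [ry|] //= Hry.
  have := Hinf _ ry Ey.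
  rewrite /q mid_nsq.
  rewrite /q in Hk Hl.
  move=> Hm.
  have : / (2 * gam) * (nsq (vsub (zs k) (zs l)) / 4) < (/ (INR k + 1) + / (INR l + 1)) / 2 by nra.
  have -> : / (2 * gam) * (nsq (vsub (zs k) (zs l)) / 4) = nsq (vsub (zs k) (zs l)) / (8 * gam) by field; lra.
  move=> H.
  have : nsq (vsub (zs k) (zs l)) / (8 * gam) * (8 * gam) < (/ (INR k + 1) + / (INR l + 1)) / 2 * (8 * gam).
    apply: Rmult_lt_compat_r; lra.
  have -> : nsq (vsub (zs k) (zs l)) / (8 * gam) * (8 * gam) = nsq (vsub (zs k) (zs l)) by field; lra.
  lra.
have Hcc : forall c, Cauchy_crit (fun k => zs k c).
  move=> c eps he.
  have he2 : 0 < eps * eps / (8 * gam) by apply: Rmult_lt_0_compat; [nra|apply: Rinv_0_lt_compat; lra].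
  have [N HN] := inv_succ_small he2.
  exists N => k l hk hl; rewrite /Rdist.
  have T : (zs k c - zs l c) * (zs k c - zs l c) <= nsq (vsub (zs k) (zs l)).
    rewrite /nsq /inner.
    apply: (rsum_term (F := fun c => vsub (zs k) (zs l) c * vsub (zs k) (zs l) c)) => c'.
    exact: Rle_0_sqr.
  have := Hcb k l; have := HN k hk; have := HN l hl => H1 H2 H3.
  have : nsq (vsub (zs k) (zs l)) < eps * eps.
    have -> : eps * eps = 4 * gam * (eps * eps / (8 * gam) + eps * eps / (8 * gam)) by field; lra.
    apply: (Rle_lt_trans _ _ _ H3); apply: Rmult_lt_compat_l; lra.
  move=> H4.
  have Ea : Rabs (zs k c - zs l c) * Rabs (zs k c - zs l c) = (zs k c - zs l c) * (zs k c - zs l c).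
    by rewrite -Rabs_mult Rabs_pos_eq //; exact: Rle_0_sqr.
  have := Rabs_pos (zs k c - zs l c); nra.
pose p : vec d := fun c => proj1_sig (R_complete _ (Hcc c)).
have Hp : forall c, Un_cv (fun k => zs k c) (p c).
  move=> c; exact: (proj2_sig (R_complete _ (Hcc c))).
have Hzp : forall k, nsq (vsub (zs k) p) <= 4 * gam * / (INR k + 1).
  move=> k.
  have cv1 : Un_cv (fun l => nsq (vsub (zs k) (zs l))) (nsq (vsub (zs k) p)).
    rewrite /nsq /inner.
    apply: (cv_rsum (F := fun l c => vsub (zs k) (zs l) c * vsub (zs k) (zs l) c)) => c.
    rewrite /vsub.
    apply: (CV_mult (fun l => zs k c - zs l c) (fun l => zs k c - zs l c));
      apply: (CV_minus (fun _ => zs k c)); [exact: cv_const|exact: Hp|exact: cv_const|exact: Hp].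
  have cv2 : Un_cv (fun l => 4 * gam * (/ (INR k + 1) + / (INR l + 1))) (4 * gam * (/ (INR k + 1) + 0)).
    apply: (CV_mult (fun _ => 4 * gam)); first exact: cv_const.
    apply: (CV_plus (fun _ => / (INR k + 1))); [exact: cv_const| exact: cv_inv_succ].
  have := Rle_cv_lim (Hcb k) cv1 cv2; rewrite Rplus_0_r //.
pose Mb := 4 * gam * (m + 1 - C).
have HMb : forall k, nsq (vsub (zs k) w) <= Mb.
  move=> k; have [Ek Hk] := Hzs k.
  have := HC _ _ Ek.
  have : / (INR k + 1) <= 1.
    rewrite -Rinv_1; apply: Rinv_le_contravar; [lra|]; have := pos_INR k; lra.
  move=> H1 H2.
  have : nsq (vsub (zs k) w) / (4 * gam) <= m + 1 - C by lra.
  move=> H3.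
  have : nsq (vsub (zs k) w) / (4 * gam) * (4 * gam) <= (m + 1 - C) * (4 * gam).
    apply: Rmult_le_compat_r; lra.
  have -> : nsq (vsub (zs k) w) / (4 * gam) * (4 * gam) = nsq (vsub (zs k) w) by field; lra.
  rewrite /Mb; lra.
have HMb0 : 0 <= Mb by have := HMb 0%nat; have := nsq_ge0 (vsub (zs 0%nat) w); lra.
have claim : forall eps, 0 < eps -> ~ ltRe (m + eps - q p) (h p).
  move=> eps he Hlt.
  have [del [hdel Hd]] := Hclos Hlt.
  pose s := 4 * Mb / (gam * eps) + 1.
  have hs0 : 0 <= 4 * Mb / (gam * eps).
    apply: Rmult_le_pos; [lra|apply: Rlt_le; apply: Rinv_0_lt_compat; nra].
  have hs : 0 < s by rewrite /s; lra.
  pose eta := Rmin (Rmin (del * del / (4 * gam)) (eps / 2)) (eps / (16 * (1 + s))).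
  have heta : 0 < eta.
    apply: Rmin_pos; first apply: Rmin_pos.
    - apply: Rmult_lt_0_compat; [nra|apply: Rinv_0_lt_compat; lra].
    - lra.
    - apply: Rmult_lt_0_compat; [lra|apply: Rinv_0_lt_compat; lra].
  have [N HN] := inv_succ_small heta.
  have hk := HN N (le_n N).
  have e1 : / (INR N + 1) < del * del / (4 * gam).
    have := Rmin_l (Rmin (del * del / (4 * gam)) (eps / 2)) (eps / (16 * (1 + s))).
    have := Rmin_l (del * del / (4 * gam)) (eps / 2). rewrite -/eta; lra.
  have e2 : / (INR N + 1) < eps / 2.
    have := Rmin_l (Rmin (del * del / (4 * gam)) (eps / 2)) (eps / (16 * (1 + s))).
    have := Rmin_r (del * del / (4 * gam)) (eps / 2). rewrite -/eta; lra.
  have e3 : / (INR N + 1) < eps / (16 * (1 + s)).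
    have := Rmin_r (Rmin (del * del / (4 * gam)) (eps / 2)) (eps / (16 * (1 + s))).
    rewrite -/eta; lra.
  have Hn : nsq (vsub (zs N) p) < del * del.
    apply: (Rle_lt_trans _ _ _ (Hzp N)).
    have -> : del * del = 4 * gam * (del * del / (4 * gam)) by field; lra.
    apply: Rmult_lt_compat_l; lra.
  have := Hd (zs N) (vnorm_lt_sq hdel Hn).
  have [EN HN2] := Hzs N.
  rewrite EN /= => Hr.
  have Ew : vsub p w = vadd (vsub p (zs N)) (vsub (zs N) w).
    apply: vec_ext => c; rewrite /vadd /vsub; ring.
  have Hib := inner_bound (vsub p (zs N)) (vsub (zs N) w) hs.
  have Hne : nsq (vsub p (zs N)) <= 4 * gam * / (INR N + 1) by rewrite nsq_sub_sym; exact: Hzp.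
  have Hb := HMb N.
  have Hb0 := nsq_ge0 (vsub (zs N) w).
  have Hbs : nsq (vsub (zs N) w) / s <= gam * eps / 4.
    apply: (Rle_trans _ (Mb / s)).
      apply: Rmult_le_compat_r; [apply: Rlt_le; apply: Rinv_0_lt_compat; lra| lra].
    apply/(Rmult_le_reg_r s) => //.
    have -> : Mb / s * s = Mb by field; lra.
    rewrite /s.
    have -> : gam * eps / 4 * (4 * Mb / (gam * eps) + 1) = Mb + gam * eps / 4 by field; lra.
    nra.
  have Hes : (1 + s) * nsq (vsub p (zs N)) <= gam * eps / 4.
    apply: (Rle_trans _ ((1 + s) * (4 * gam * / (INR N + 1)))).
      apply: Rmult_le_compat_l; lra.
    have : (1 + s) * (4 * gam * / (INR N + 1)) <= (1 + s) * (4 * gam * (eps / (16 * (1 + s)))).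
      apply: Rmult_le_compat_l; [lra|]; apply: Rmult_le_compat_l; lra.
    have -> : (1 + s) * (4 * gam * (eps / (16 * (1 + s)))) = gam * eps / 4 by field; lra.
    done.
  have Hdiff : nsq (vsub p w) - nsq (vsub (zs N) w) <= gam * eps / 2.
    rewrite Ew nsq_add; have := nsq_ge0 (vsub p (zs N)); nra.
  have Hqd : q p - q (zs N) <= eps / 4.
    rewrite /q -Rmult_minus_distr_l.
    have -> : eps / 4 = / (2 * gam) * (gam * eps / 2) by field; lra.
    apply: Rmult_le_compat_l => //; apply: Rlt_le; apply: Rinv_0_lt_compat; lra.
  lra.
case Ehp: (h p) => [rp|]; last first.
  by exfalso; apply: (claim 1 Rlt_0_1); rewrite Ehp.
have Hrp : rp + q p <= m.
  apply: Rnot_lt_le => H.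
  apply: (claim ((rp + q p - m) / 2) ltac:(lra)); rewrite Ehp /=; lra.
exists p => z; rewrite Ehp; case Ez: (h z) => [r|] //=.
have := Hinf z r Ez; rewrite /q in Hrp *; lra.
Qed.

End ProxEx.

Lemma prox_spec d (h : vec d -> ereal) gam w : 0 < gam -> proper_fun h -> closed_fun h -> convex_efun h ->
  is_prox h gam w (prox h gam w).
Proof.
move=> *; rewrite /prox; apply: epsilon_spec; exact: prox_exists.
Qed.

Section Opt.
Variable d : nat.
Variable h : vec d -> ereal.
Variables (F0 : vec d -> R) (G0 : vec d -> vec d) (L gam : R).
Hypothesis Hgam : 0 < gam.
Hypothesis Hprop : proper_fun h.
Hypothesis Hconv : convex_efun h.
Hypothesis Hde : forall x y, F0 y <= F0 x + inner (G0 x) (vsub y x) + L / 2 * nsq (vsub y x).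
Variable xs : vec d.
Hypothesis Hmin : forall x, ele (eadd (EFin (F0 xs)) (h xs)) (eadd (EFin (F0 x)) (h x)).

Lemma opt_prox : is_prox h gam (vsub xs (vscal gam (G0 xs))) xs.
Proof.
case: Hprop => x1; case Ex1: (h x1) => [a|] // _.
have := Hmin x1; rewrite Ex1; case Eb: (h xs) => [b|] //= _.
move=> z; case Ez: (h z) => [r|] //=.
have key : b - r <= inner (G0 xs) (vsub z xs).
  apply: (le_small (c := L / 2 * nsq (vsub z xs))) => t ht.
  set zt := vadd (vscal t z) (vscal (1 - t) xs).
  have := Hconv z xs ht; rewrite Ez Eb /= -/zt.
  case Ezt: (h zt) => [rt|] //= Hrt.
  have := Hmin zt; rewrite Eb Ezt /= => Hm.
  have Ev : vsub zt xs = vscal t (vsub z xs).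
    apply: vec_ext => c; rewrite /zt /vadd /vsub /vscal; ring.
  have := Hde xs zt; rewrite Ev inner_scalr nsq_scal => Hd.
  have K : t * (b - r) <= t * (inner (G0 xs) (vsub z xs) + t * (L / 2 * nsq (vsub z xs))) by nra.
  apply: (Rmult_le_reg_l t); lra.
have Ew : vsub z (vsub xs (vscal gam (G0 xs))) = vadd (vsub z xs) (vscal gam (G0 xs)).
  apply: vec_ext => c; rewrite /vadd /vsub /vscal; ring.
have Ex : vsub xs (vsub xs (vscal gam (G0 xs))) = vscal gam (G0 xs).
  apply: vec_ext => c; rewrite /vadd /vsub /vscal; ring.
rewrite Ew Ex nsq_add inner_scalr (inner_sym (vsub z xs)).
have := nsq_ge0 (vsub z xs).
have E2 : / (2 * gam) * (nsq (vsub z xs) + 2 * (gam * inner (G0 xs) (vsub z xs)) + nsq (vscal gam (G0 xs)))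
  = / (2 * gam) * nsq (vsub z xs) + inner (G0 xs) (vsub z xs) + / (2 * gam) * nsq (vscal gam (G0 xs)).
  field; lra.
rewrite E2 Eb /=.
have : 0 <= / (2 * gam) * nsq (vsub z xs).
  apply: Rmult_le_pos; [apply: Rlt_le; apply: Rinv_0_lt_compat; lra| exact: nsq_ge0].
lra.
by case: (h xs).
Qed.
End Opt.

Section Avg.
Variables (n d : nat).
Hypothesis Hn : 0 < INR n.
Implicit Types (X Z : 'I_n -> vec d) (a b : vec d).

Lemma avg_const k : / INR n * rsum (fun _ : 'I_n => k) = k.
Proof. rewrite rsum_const; field; lra. Qed.

Lemma avg_inner a X : / INR n * rsum (fun j => inner a (X j)) = inner a (vscal (/ INR n) (vsum X)).
Proof. by rewrite inner_scalr inner_sumr. Qed.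

Lemma rsum_update (F : 'I_n -> vec d -> R) (phi : 'I_n -> vec d) j x :
  rsum (fun i => F i (if i == j then x else phi i)) = rsum (fun i => F i (phi i)) + F j x - F j (phi j).
Proof.
rewrite /rsum (bigD1 j) //= eqxx [in RHS](bigD1 j) //=.
rewrite (eq_bigr (fun i => F i (phi i))); last by move=> i /negbTE ->.
ring.
Qed.

Lemma var_bound X Z :
  / INR n * rsum (fun j => nsq (vadd (vsub (X j) (Z j)) (vscal (/ INR n) (vsum Z))))
  <= 3 * (/ INR n * rsum (fun j => nsq (X j))) - 2 * nsq (vscal (/ INR n) (vsum X))
     + 3 / 2 * (/ INR n * rsum (fun j => nsq (Z j))).
Proof.
set Xb := vscal (/ INR n) (vsum X).
set Zb := vscal (/ INR n) (vsum Z).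
have pw : forall j, nsq (vadd (vsub (X j) (Z j)) Zb) <=
   3 * nsq (X j) + 3 / 2 * nsq (Z j) + (2 - 6) * inner Xb (X j) + (-2) * inner Xb (Z j)
   + (-3) * inner Zb (Z j) + (1 - 2 + 3) * nsq Xb + 2 * inner Xb Zb + 3 / 2 * nsq Zb.
  move=> j.
  have E : vadd (vsub (X j) (Z j)) Zb = vadd Xb (vadd (vsub (X j) Xb) (vsub Zb (Z j))).
    apply: vec_ext => c; rewrite /vadd /vsub; ring.
  rewrite E nsq_add nsq_add.
  have := inner_bound (vsub (X j) Xb) (vsub Zb (Z j)) (s := 2) ltac:(lra).
  rewrite /nsq !(inner_addr, inner_subl, inner_subr, inner_addl).
  rewrite ?(inner_sym (X j) Xb) ?(inner_sym (Z j) Zb) ?(inner_sym Zb Xb) ?(inner_sym (Z j) Xb) ?(inner_sym Zb (X j)) ?(inner_sym (Z j) (X j)).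
  move=> H.
  lra.
have := rsum_le pw.
rewrite !rsum_add !rsum_scal !rsum_const.
move=> H.
have H2 := Rmult_le_compat_l (/ INR n) _ _ (Rlt_le _ _ (Rinv_0_lt_compat _ Hn)) H.
have E1 : / INR n * rsum (fun j => inner Xb (X j)) = nsq Xb by rewrite avg_inner.
have E2 : / INR n * rsum (fun j => inner Xb (Z j)) = inner Xb Zb by rewrite avg_inner.
have E3 : / INR n * rsum (fun j => inner Zb (Z j)) = nsq Zb by rewrite avg_inner.
have hZ := nsq_ge0 Zb.
move: H2.
set sX := rsum (fun j => nsq (X j)).
set sZ := rsum (fun j => nsq (Z j)).
set s1 := rsum (fun j => inner Xb (X j)) in E1 *.
set s2 := rsum (fun j => inner Xb (Z j)) in E2 *.
set s3 := rsum (fun j => inner Zb (Z j)) in E3 *.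
move=> H2.
have Einv : / INR n * INR n = 1 by field; lra.
apply: (Rle_trans _ _ _ H2).
have -> : / INR n *
    (3 * sX + 3 / 2 * sZ + (2 - 6) * s1 + -2 * s2 + -3 * s3 +
     (1 - 2 + 3) * (INR n * nsq Xb) + 2 * (INR n * inner Xb Zb) +
     3 / 2 * (INR n * nsq Zb))
  = 3 * (/ INR n * sX) + 3 / 2 * (/ INR n * sZ) + (2 - 6) * (/ INR n * s1) - 2 * (/ INR n * s2)
    - 3 * (/ INR n * s3) + (1 - 2 + 3) * nsq Xb + 2 * inner Xb Zb + 3 / 2 * nsq Zb.
  field; lra.
rewrite E1 E2 E3; lra.
Qed.

End Avg.

Lemma rsum_tuple0 (T : finType) (F : 0.-tuple T -> R) : rsum F = F [tuple].
Proof.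
rewrite /rsum (eq_bigr (fun _ => F [tuple])); last by move=> t _; rewrite tuple0.
rewrite big_const card_tuple expn0 /=; ring.
Qed.

Lemma rsum_tupleS k (T : finType) (F : k.+1.-tuple T -> R) :
  rsum F = rsum (fun j => rsum (fun t : k.-tuple T => F [tuple of j :: t])).
Proof.
rewrite /rsum pair_bigA /=.
pose hh := fun p : T * k.-tuple T => [tuple of p.1 :: p.2].
rewrite (reindex hh) //=.
exists (fun t : k.+1.-tuple T => (thead t, [tuple of behead t])).
- move=> [x t] _ /=; congr pair; apply: val_inj => //.
- by move=> t _; rewrite /hh /= -tuple_eta.
Qed.

Section Saga.
Variables (n d : nat) (fs : 'I_n -> vec d -> R) (g : 'I_n -> vec d -> vec d) (h : vec d -> ereal).
Variables (L mu : R) (xs : vec d).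
Hypothesis Hn : 0 < INR n.
Hypothesis HL : 0 < L.
Hypothesis Hmu : 0 < mu.
Hypothesis Hmul : mu <= L.
Hypothesis Hgrad : forall i, is_gradient (fs i) (g i).
Hypothesis Hsc : forall i, strongly_convex mu (fs i).
Hypothesis Hlip : forall i, lipschitz_grad L (g i).
Hypothesis Hprop : proper_fun h.
Hypothesis Hclos : closed_fun h.
Hypothesis Hconv : convex_efun h.
Hypothesis Hmin : forall x, ele (eadd (EFin (favg fs xs)) (h xs)) (eadd (EFin (favg fs x)) (h x)).

Local Notation N := (INR n).
Let gam := / (3 * L).

Lemma desc_i i x y : fs i y <= fs i x + inner (g i x) (vsub y x) + L / 2 * nsq (vsub y x).
Proof. exact: (descent (Hgrad i) (Hlip i)). Qed.

Lemma sc_i i x y : fs i x + inner (g i x) (vsub y x) + mu / 2 * nsq (vsub y x) <= fs i y.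
Proof. exact: (sc_first (Hgrad i) (Hsc i)). Qed.

Lemma inner_gavg x v : inner (gavg g x) v = / N * rsum (fun i => inner (g i x) v).
Proof. by rewrite /gavg inner_scall inner_suml. Qed.

Lemma Fdesc x y : favg fs y <= favg fs x + inner (gavg g x) (vsub y x) + L / 2 * nsq (vsub y x).
Proof.
rewrite inner_gavg /favg.
have := rsum_le (fun i => desc_i i x y).
rewrite !rsum_add rsum_const => H.
have hN : 0 < / N by apply: Rinv_0_lt_compat.
have := Rmult_le_compat_l _ _ _ (Rlt_le _ _ hN) H.
have -> : / N * (rsum (fun i => fs i x) + rsum (fun i => inner (g i x) (vsub y x)) + N * (L / 2 * nsq (vsub y x)))
   = / N * rsum (fun i => fs i x) + / N * rsum (fun i => inner (g i x) (vsub y x)) + L / 2 * nsq (vsub y x).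
  field; lra.
done.
Qed.

Lemma gam_pos : 0 < gam.
Proof. rewrite /gam; apply: Rinv_0_lt_compat; lra. Qed.

Definition Di i y := fs i y - fs i xs - inner (g i xs) (vsub y xs).

Lemma Di_ge0 i y : mu / 2 * nsq (vsub y xs) <= Di i y.
Proof. rewrite /Di; have := sc_i i xs y; lra. Qed.

Lemma Di_ge0' i y : 0 <= Di i y.
Proof. have := Di_ge0 i y; have := nsq_ge0 (vsub y xs); nra. Qed.

Lemma coco0 i y : nsq (vsub (g i y) (g i xs)) <= 2 * L * Di i y.
Proof.
have Hs0 : forall a b, fs i b + inner (g i b) (vsub a b) + 0 / 2 * nsq (vsub a b) <= fs i a.
  move=> a b; have := sc_i i b a; have := nsq_ge0 (vsub a b).
  have -> : 0 / 2 = 0 by field.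
  nra.
have := coco Hs0 (fun a b => desc_i i b a) (conj (Rle_refl 0) (Rlt_le _ _ HL)) y xs.
have E : vsub (vsub (g i y) (g i xs)) (vscal 0 (vsub y xs)) = vsub (g i y) (g i xs).
  apply: vec_ext => c; rewrite /vsub /vscal; ring.
rewrite E /Di.
have -> : 2 * (L - 0) * (fs i y - fs i xs - inner (g i xs) (vsub y xs) - 0 / 2 * nsq (vsub y xs))
   = 2 * L * (fs i y - fs i xs - inner (g i xs) (vsub y xs)) by field.
done.
Qed.

Lemma coco_mu i x :
  2 * (L - mu) * Di i x + nsq (vsub (g i x) (g i xs)) + L * mu * nsq (vsub x xs)
  <= 2 * L * inner (vsub (g i x) (g i xs)) (vsub x xs).
Proof.
have := coco (fun a b => sc_i i b a) (fun a b => desc_i i b a) (conj (Rlt_le _ _ Hmu) Hmul) xs x.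
have E1 : nsq (vsub (vsub (g i xs) (g i x)) (vscal mu (vsub xs x)))
        = nsq (vsub (g i x) (g i xs)) - 2 * mu * inner (vsub (g i x) (g i xs)) (vsub x xs) + mu * mu * nsq (vsub x xs).
  rewrite /nsq /inner -rsum_scal -rsum_scal -rsum_sub -rsum_add; apply: rsum_ext => c; rewrite /vsub /vscal; ring.
have E2 : nsq (vsub xs x) = nsq (vsub x xs) by exact: nsq_sub_sym.
have E3 : inner (vsub (g i x) (g i xs)) (vsub x xs) = Di i x + (fs i xs - fs i x - inner (g i x) (vsub xs x)).
  rewrite /Di inner_subl.
  have -> : vsub xs x = vscal (-1) (vsub x xs) by apply: vec_ext => c; rewrite /vsub /vscal; ring.
  rewrite inner_scalr; ring.
rewrite E1 E2 E3 => H.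
have := nsq_ge0 (vsub x xs).
nra.
Qed.

Lemma avg_le (F G : 'I_n -> R) : (forall i, F i <= G i) -> / N * rsum F <= / N * rsum G.
Proof.
move=> H; apply: Rmult_le_compat_l; first by apply: Rlt_le; apply: Rinv_0_lt_compat.
exact: rsum_le.
Qed.

Definition Aphi (phi : 'I_n -> vec d) := / N * rsum (fun i => Di i (phi i)).
Definition cc := 9 * L / (4 * N).
Definition Tf (s : vec d * ('I_n -> vec d)) := Aphi s.2 + cc * nsq (vsub s.1 xs).

Lemma Aphi_ge0 phi : 0 <= Aphi phi.
Proof.
rewrite /Aphi; apply: Rmult_le_pos; first by apply: Rlt_le; apply: Rinv_0_lt_compat.
apply: rsum_ge0 => i; exact: Di_ge0'.
Qed.

Lemma cc_pos : 0 < cc.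
Proof. rewrite /cc; apply: Rmult_lt_0_compat; [lra|apply: Rinv_0_lt_compat; lra]. Qed.

Lemma one_step x phi :
  / N * rsum (fun j => Tf (saga_step g h gam (x, phi) j))
  <= (1 - / (4 * N)) * Aphi phi + cc * (1 - mu / (3 * L)) * nsq (vsub x xs).
Proof.
have hN := Hn.
pose avgp := vscal (/ N) (vsum (fun i => g i (phi i))).
pose X := fun j => vsub (g j x) (g j xs).
pose Z := fun j => vsub (g j (phi j)) (g j xs).
pose Xb := vscal (/ N) (vsum X).
pose Zb := vscal (/ N) (vsum Z).
pose v := vsub x xs.
pose wst := vsub xs (vscal gam (gavg g xs)).
pose wj := fun j => vsub x (vscal gam (vadd (vsub (g j x) (g j (phi j))) avgp)).
pose e := fun j => vadd (vsub (X j) (Z j)) Zb.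
have Hopt : is_prox h gam wst xs := opt_prox gam_pos Hprop Hconv Fdesc Hmin.
have step_eq : forall j, Tf (saga_step g h gam (x, phi) j)
   = Aphi (fun i => if i == j then x else phi i) + cc * nsq (vsub (prox h gam (wj j)) xs).
  by move=> j; rewrite /Tf /saga_step /= eqxx.
have Zbc : forall c, Zb c = avgp c - gavg g xs c.
  move=> c; rewrite /Zb /avgp /Z /vscal /vsum /gavg /vsub /vscal /vsum rsum_sub; ring.
have Ew : forall j, vsub (wj j) wst = vadd v (vscal (- gam) (e j)).
  move=> j; apply: vec_ext => c; rewrite /wj /wst /v /e /X /Z /vadd /vsub /vscal Zbc; rewrite /avgp /vscal; ring.
have Hnx : forall j, nsq (vsub (prox h gam (wj j)) xs)
    <= nsq v - 2 * gam * inner v (e j) + gam * gam * nsq (e j).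
  move=> j.
  have := prox_nonexp gam_pos Hprop Hconv (prox_spec (wj j) gam_pos Hprop Hclos Hconv) Hopt.
  rewrite Ew nsq_add inner_scalr nsq_scal.
  have -> : - gam * - gam = gam * gam by ring.
  lra.
pose B := / N * rsum (fun i => Di i x).
have EA : / N * rsum (fun j => Aphi (fun i => if i == j then x else phi i))
        = (1 - / N) * Aphi phi + / N * B.
  rewrite /Aphi.
  have -> : rsum (fun j => / N * rsum (fun i => Di i (if i == j then x else phi i)))
          = rsum (fun j => / N * (rsum (fun i => Di i (phi i)) + Di j x - Di j (phi j))).
    by apply: rsum_ext => j; rewrite (rsum_update Di).
  rewrite rsum_scal (rsum_sub (fun j => rsum (fun i => Di i (phi i)) + Di j x) (fun j => Di j (phi j))).
  rewrite (rsum_add (fun _ => rsum (fun i => Di i (phi i))) (fun j => Di j x)) rsum_const /B.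
  field; lra.
have EI : / N * rsum (fun j => inner v (e j)) = inner v Xb.
  rewrite /e.
  have -> : rsum (fun j => inner v (vadd (vsub (X j) (Z j)) Zb))
          = rsum (fun j => inner v (X j) - inner v (Z j) + inner v Zb).
    by apply: rsum_ext => j; rewrite inner_addr inner_subr.
  rewrite rsum_add rsum_sub rsum_const.
  have E1 := avg_inner v X. have E2 := avg_inner v Z.
  rewrite -/Xb -/Zb in E1 E2.
  have -> : / N * (rsum (fun j => inner v (X j)) - rsum (fun j => inner v (Z j)) + N * inner v Zb)
     = / N * rsum (fun j => inner v (X j)) - / N * rsum (fun j => inner v (Z j)) + inner v Zb.
    field; lra.
  rewrite E1 E2; ring.
have VB := var_bound Hn X Z.
rewrite -/Xb -/Zb in VB.
set Gx := / N * rsum (fun j => nsq (X j)) in VB.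
set Hp := / N * rsum (fun j => nsq (Z j)) in VB.
have HpA : Hp <= 2 * L * Aphi phi.
  have H := avg_le (fun i => coco0 i (phi i)).
  rewrite (rsum_scal (2 * L) (fun i => Di i (phi i))) in H.
  rewrite /Hp /Aphi /Z.
  have -> : 2 * L * (/ N * rsum (fun i => Di i (phi i))) = / N * (2 * L * rsum (fun i => Di i (phi i))) by ring.
  exact H.
have Ncan : forall c, / N * (N * c) = c by move=> c; field; lra.
have Icoco : 2 * (L - mu) * B + Gx + L * mu * nsq v <= 2 * L * inner Xb v.
  have H := avg_le (fun i => coco_mu i x).
  rewrite (rsum_add (fun i => 2 * (L - mu) * Di i x + nsq (vsub (g i x) (g i xs))) (fun _ => L * mu * nsq (vsub x xs))) in H.
  rewrite (rsum_add (fun i => 2 * (L - mu) * Di i x) (fun i => nsq (vsub (g i x) (g i xs)))) in H.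
  rewrite (rsum_scal (2 * (L - mu)) (fun i => Di i x)) rsum_const in H.
  rewrite (rsum_scal (2 * L) (fun i => inner (vsub (g i x) (g i xs)) (vsub x xs))) in H.
  have E1 : / N * rsum (fun i => inner (vsub (g i x) (g i xs)) (vsub x xs)) = inner Xb v.
    by rewrite /Xb /X /v inner_scall inner_suml.
  rewrite -E1 /Gx /B /X /v.
  have := Ncan (L * mu * nsq (vsub x xs)).
  lra.
have QB : 2 * mu * B <= nsq Xb.
  have pw : forall i, Di i x <= inner (vsub (g i x) (g i xs)) (vsub x xs) - mu / 2 * nsq (vsub x xs).
    move=> i; have := sc_i i x xs.
    rewrite /Di inner_subl.
    have -> : vsub xs x = vscal (-1) (vsub x xs) by apply: vec_ext => c; rewrite /vsub /vscal; ring.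
    rewrite inner_scalr nsq_scal.
    lra.
  have H1 := avg_le pw.
  rewrite (rsum_sub (fun i => inner (vsub (g i x) (g i xs)) (vsub x xs)) (fun _ => mu / 2 * nsq (vsub x xs))) rsum_const in H1.
  have E1 : / N * rsum (fun i => inner (vsub (g i x) (g i xs)) (vsub x xs)) = inner Xb v.
    by rewrite /Xb /X /v inner_scall inner_suml.
  have Nc := Ncan (mu / 2 * nsq (vsub x xs)).
  have H1' : B <= inner Xb v - mu / 2 * nsq v.
    rewrite /B -E1 /v; rewrite Rmult_minus_distr_l Nc in H1; exact H1.
  have := inner_bound Xb v (s := / mu) ltac:(apply: Rinv_0_lt_compat; lra).
  have -> : nsq v / / mu = mu * nsq v by field; lra.
  move=> H2.
  have : 2 * mu * B <= mu * (/ mu * nsq Xb) by nra.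
  have -> : mu * (/ mu * nsq Xb) = nsq Xb by field; lra.
  done.
have HB0 : 0 <= B.
  rewrite /B; apply: Rmult_le_pos; first by apply: Rlt_le; apply: Rinv_0_lt_compat.
  apply: rsum_ge0 => i; exact: Di_ge0'.
have HA0 := Aphi_ge0 phi.
have HP0 := nsq_ge0 v.
have Esum : / N * rsum (fun j => Tf (saga_step g h gam (x, phi) j))
  = / N * rsum (fun j => Aphi (fun i => if i == j then x else phi i))
    + cc * (/ N * rsum (fun j => nsq (vsub (prox h gam (wj j)) xs))).
  rewrite (rsum_ext step_eq) rsum_add rsum_scal; ring.
have Hsum2 : / N * rsum (fun j => nsq (vsub (prox h gam (wj j)) xs))
   <= nsq v - 2 * gam * inner v Xb + gam * gam * (/ N * rsum (fun j => nsq (e j))).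
  apply: (Rle_trans _ _ _ (avg_le Hnx)).
  rewrite rsum_add rsum_sub !rsum_scal rsum_const.
  have -> : / N * (N * nsq v - 2 * gam * rsum (fun j => inner v (e j)) + gam * gam * rsum (fun j => nsq (e j)))
     = nsq v - 2 * gam * (/ N * rsum (fun j => inner v (e j))) + gam * gam * (/ N * rsum (fun j => nsq (e j))).
    field; lra.
  rewrite EI; lra.
rewrite Esum EA.
rewrite -/v.
have VB' : / N * rsum (fun j => nsq (e j)) <= 3 * Gx - 2 * nsq Xb + 3 / 2 * Hp := VB.
set V := / N * rsum (fun j => nsq (e j)) in Hsum2 VB'.
set Q := nsq Xb in VB' QB.
set I := inner Xb v in Icoco.
rewrite (inner_sym v Xb) -/I in Hsum2.
set A := Aphi phi in HpA HA0 *.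
set P := nsq v in Hsum2 Icoco HP0 *.
have Hg : gam = / (3 * L) by [].
have Hcc : cc = 9 * L / (4 * N) by [].
clearbody V Q I A P B Gx Hp.
have K1 : cc * (P - 2 * gam * I + gam * gam * V)
   <= cc * P - 3 / (2 * N) * I + / (4 * N * L) * V.
  rewrite Hcc Hg; right; field; lra.
have Hsum3 := Rmult_le_compat_l _ _ _ (Rlt_le _ _ cc_pos) Hsum2.
have iN : 0 < / N by apply: Rinv_0_lt_compat.
have iNL : 0 < / (4 * N * L) by apply: Rinv_0_lt_compat; nra.
have K2 : / (4 * N * L) * V <= / (4 * N * L) * (3 * Gx - 2 * Q + 3 / 2 * Hp) by apply: Rmult_le_compat_l; lra.
have K3 : / (4 * N * L) * (3 / 2 * Hp) <= 3 / (4 * N) * A.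
  have : / (4 * N * L) * (3 / 2 * Hp) <= / (4 * N * L) * (3 / 2 * (2 * L * A)) by apply: Rmult_le_compat_l; lra.
  have -> : / (4 * N * L) * (3 / 2 * (2 * L * A)) = 3 / (4 * N) * A by field; lra.
  done.
have K4 : - (3 / (2 * N) * I) <= - (3 / (4 * N * L) * (2 * (L - mu) * B + Gx + L * mu * P)).
  apply: Ropp_le_contravar.
  have : 3 / (4 * N * L) * (2 * (L - mu) * B + Gx + L * mu * P) <= 3 / (4 * N * L) * (2 * L * I).
    apply: Rmult_le_compat_l; [apply: Rmult_le_pos; lra| lra].
  have -> : 3 / (4 * N * L) * (2 * L * I) = 3 / (2 * N) * I by field; lra.
  done.
have K5 : / (4 * N * L) * (2 * mu * B) <= / (4 * N * L) * Q by apply: Rmult_le_compat_l; lra.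
have K6 : (mu - L) * B <= 0 by nra.
have Ef : cc * (1 - mu / (3 * L)) * P = cc * P - 3 * mu / (4 * N) * P.
  rewrite Hcc; field; lra.
rewrite Ef.
(* collect everything: bound is linear in the atoms after expanding products *)
have E1 : / (4 * N * L) * (3 * Gx - 2 * Q + 3 / 2 * Hp)
   = 3 / (4 * N * L) * Gx - 2 * (/ (4 * N * L) * Q) + / (4 * N * L) * (3 / 2 * Hp) by field; lra.
have E2 : 3 / (4 * N * L) * (2 * (L - mu) * B + Gx + L * mu * P)
   = 3 / (2 * N) * B - 3 * mu / (2 * N * L) * B + 3 / (4 * N * L) * Gx + 3 * mu / (4 * N) * P by field; lra.
have E3 : / (4 * N * L) * (2 * mu * B) = mu / (2 * N * L) * B by field; lra.
have E4 : (1 - / (4 * N)) * A = (1 - / N) * A + 3 / (4 * N) * A by field; lra.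
have K7 : mu / (2 * N * L) * B <= / (2 * N) * B.
  apply: Rmult_le_compat_r => //.
  have -> : mu / (2 * N * L) = / (2 * N) * (mu / L) by field; lra.
  have : mu / L <= 1 by apply/(Rmult_le_reg_r L) => //; rewrite /Rdiv Rmult_assoc Rinv_l; lra.
  have : 0 < / (2 * N) by apply: Rinv_0_lt_compat; lra.
  nra.
have E5 : / N * B = 3 / (2 * N) * B - / (2 * N) * B by field; lra.
lra.
Qed.

Let alpha := Rmin (/ (4 * N)) (mu / (3 * L)).

Lemma alpha_le1 : alpha <= / (4 * N).
Proof. exact: Rmin_l. Qed.
Lemma alpha_le2 : alpha <= mu / (3 * L).
Proof. exact: Rmin_r. Qed.
Lemma N_ge1 : 1 <= N.
Proof.
have h0 : (0 < n)%coq_nat by apply: INR_lt; rewrite /=; exact: Hn.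
have := le_INR 1 n h0; rewrite /=; lra.
Qed.

Lemma alpha_lt1 : 0 <= 1 - alpha.
Proof.
have := alpha_le1.
have : / (4 * N) <= 1.
  rewrite -Rinv_1; apply: Rinv_le_contravar; first lra.
  have := N_ge1; lra.
lra.
Qed.

Lemma one_step' s : / N * rsum (fun j => Tf (saga_step g h gam s j)) <= (1 - alpha) * Tf s.
Proof.
case: s => x phi.
apply: (Rle_trans _ _ _ (one_step x phi)).
rewrite /Tf /=.
have HA := Aphi_ge0 phi.
have HP := nsq_ge0 (vsub x xs).
have Hc := cc_pos.
have := alpha_le1; have := alpha_le2 => a2 a1.
have : (1 - / (4 * N)) * Aphi phi <= (1 - alpha) * Aphi phi by apply: Rmult_le_compat_r; lra.
have : cc * (1 - mu / (3 * L)) * nsq (vsub x xs) <= cc * (1 - alpha) * nsq (vsub x xs).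
  apply: Rmult_le_compat_r => //; apply: Rmult_le_compat_l; lra.
nra.
Qed.

Lemma expect_T k s :
  / (N ^ k) * rsum (fun js : k.-tuple 'I_n => Tf (foldl (saga_step g h gam) s js))
  <= (1 - alpha) ^ k * Tf s.
Proof.
elim: k s => [|k IH] s.
  rewrite rsum_tuple0 /=; lra.
rewrite rsum_tupleS /=.
have E : forall j, rsum (fun t : k.-tuple 'I_n => Tf (foldl (saga_step g h gam) s [tuple of j :: t]))
               = rsum (fun t : k.-tuple 'I_n => Tf (foldl (saga_step g h gam) (saga_step g h gam s j) t)).
  by move=> j; apply: rsum_ext.
have hNk : 0 < N ^ k by apply: pow_lt.
have -> : / (N * N ^ k) * rsum (fun j => rsum (fun t : k.-tuple 'I_n => Tf (foldl (saga_step g h gam) (saga_step g h gam s j) t)))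
   = / N * rsum (fun j => / (N ^ k) * rsum (fun t : k.-tuple 'I_n => Tf (foldl (saga_step g h gam) (saga_step g h gam s j) t))).
  rewrite rsum_scal Rinv_mult; ring.
apply: (Rle_trans _ (/ N * rsum (fun j => (1 - alpha) ^ k * Tf (saga_step g h gam s j)))).
  apply: avg_le => j; exact: IH.
rewrite rsum_scal.
have hk : 0 <= (1 - alpha) ^ k by apply: pow_le; exact: alpha_lt1.
have := one_step' s.
have -> : / N * ((1 - alpha) ^ k * rsum (fun j => Tf (saga_step g h gam s j)))
   = (1 - alpha) ^ k * (/ N * rsum (fun j => Tf (saga_step g h gam s j))) by ring.
move=> H.
apply: (Rle_trans _ ((1 - alpha) ^ k * ((1 - alpha) * Tf s))).
  by apply: Rmult_le_compat_l.
right; ring.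
Qed.

Lemma saga_bound k x0 :
  expect_k k (fun js => nsq (vsub (saga_run g h gam x0 js).1 xs))
  <= (1 - alpha) ^ k *
     (nsq (vsub x0 xs) + 2 * N / (3 * L) * (favg fs x0 - inner (gavg g xs) (vsub x0 xs) - favg fs xs)).
Proof.
have Hc := cc_pos.
have hNk : 0 < N ^ k by apply: pow_lt.
have hk : 0 <= (1 - alpha) ^ k by apply: pow_le; exact: alpha_lt1.
rewrite /expect_k /saga_run.
set s0 := (x0, fun _ : 'I_n => x0).
have H1 : rsum (fun js : k.-tuple 'I_n => nsq (vsub (foldl (saga_step g h gam) s0 js).1 xs))
   <= rsum (fun js : k.-tuple 'I_n => / cc * Tf (foldl (saga_step g h gam) s0 js)).
  apply: rsum_le => js; rewrite /Tf.
  have := Aphi_ge0 (foldl (saga_step g h gam) s0 js).2.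
  have -> : / cc * (Aphi (foldl (saga_step g h gam) s0 js).2 + cc * nsq (vsub (foldl (saga_step g h gam) s0 js).1 xs))
     = / cc * Aphi (foldl (saga_step g h gam) s0 js).2 + nsq (vsub (foldl (saga_step g h gam) s0 js).1 xs).
    field; lra.
  have : 0 < / cc by apply: Rinv_0_lt_compat.
  move=> hc hA; have := Rmult_le_pos _ _ (Rlt_le _ _ hc) hA.
  move=> H0; rewrite -[X in X <= _]Rplus_0_l; exact: Rplus_le_compat_r.
rewrite rsum_scal in H1.
have H2 := expect_T k s0.
have EB : Aphi (fun _ : 'I_n => x0) = favg fs x0 - inner (gavg g xs) (vsub x0 xs) - favg fs xs.
  rewrite /Aphi /Di inner_gavg /favg.
  rewrite (rsum_sub (fun i => fs i x0 - fs i xs) (fun i => inner (g i xs) (vsub x0 xs))).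
  rewrite (rsum_sub (fun i => fs i x0) (fun i => fs i xs)); ring.
have EB0 := Aphi_ge0 (fun _ : 'I_n => x0).
rewrite EB in EB0.
have Ts0 : Tf s0 = (favg fs x0 - inner (gavg g xs) (vsub x0 xs) - favg fs xs) + cc * nsq (vsub x0 xs).
  by rewrite /Tf /= EB.
rewrite Ts0 in H2.
set B0 := favg fs x0 - inner (gavg g xs) (vsub x0 xs) - favg fs xs in EB0 Ts0 H2 *.
set S := rsum (fun js : k.-tuple 'I_n => Tf (foldl (saga_step g h gam) s0 js)) in H1 H2.
set S' := rsum (fun js : k.-tuple 'I_n => nsq (vsub (foldl (saga_step g h gam) s0 js).1 xs)) in H1 *.
have ic : 0 < / cc by apply: Rinv_0_lt_compat.
have iNk : 0 < / N ^ k by apply: Rinv_0_lt_compat.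
have S1 : / N ^ k * S' <= / cc * (/ N ^ k * S).
  have := Rmult_le_compat_l _ _ _ (Rlt_le _ _ iNk) H1; lra.
have S2 : / cc * (/ N ^ k * S) <= / cc * ((1 - alpha) ^ k * (B0 + cc * nsq (vsub x0 xs))).
  by apply: Rmult_le_compat_l; lra.
have E3 : / cc * ((1 - alpha) ^ k * (B0 + cc * nsq (vsub x0 xs)))
   = (1 - alpha) ^ k * (nsq (vsub x0 xs) + 4 * N / (9 * L) * B0).
  rewrite /cc; field; split; lra.
have E4 : 4 * N / (9 * L) * B0 <= 2 * N / (3 * L) * B0.
  apply: Rmult_le_compat_r => //.
  have -> : 2 * N / (3 * L) = 4 * N / (9 * L) + 2 * N / (9 * L) by field; lra.
  have : 0 <= 2 * N / (9 * L).
    apply: Rmult_le_pos; [lra| apply: Rlt_le; apply: Rinv_0_lt_compat; lra].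
  lra.
have := Rmult_le_compat_l _ _ _ hk (Rplus_le_compat_l (nsq (vsub x0 xs)) _ _ E4).
lra.
Qed.

End Saga.

Lemma rsum_zero (I : finType) : rsum (fun _ : I => 0) = 0.
Proof. rewrite (rsum_ext (G := fun _ => 0 * 0)); last by move=> *; ring. rewrite rsum_scal; ring. Qed.

Lemma mu_le_L d (f : vec d.+1 -> R) gf L mu :
  is_gradient f gf -> strongly_convex mu f -> lipschitz_grad L gf -> mu <= L.
Proof.
move=> Hg Hs Hl.
pose e : vec d.+1 := fun c => if c == ord0 then 1 else 0.
have He : nsq e = 1.
  rewrite /nsq /inner /rsum (bigD1 ord0) //= /e eqxx big1; first ring.
  by move=> i /negbTE ->; ring.
pose x : vec d.+1 := fun _ => 0.
have E : vsub (vadd x e) x = e by apply: vec_ext => c; rewrite /vsub /vadd /x; ring.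
have := sc_first Hg Hs x (vadd x e).
have := descent Hg Hl x (vadd x e).
rewrite E He; lra.
Qed.

Unset Implicit Arguments.
Set Strict Implicit.

Theorem mainTheorem6 (n d : nat) (fs : 'I_n -> vec d -> R) (g : 'I_n -> vec d -> vec d)
  (h : vec d -> ereal) (L mu : R) (x0 xstar : vec d) :
  (0 < n)%nat -> 0 < L -> 0 < mu ->
  (forall i, is_gradient (fs i) (g i)) ->
  (forall i, convex_fun (fs i)) ->
  (forall i, strongly_convex mu (fs i)) ->
  (forall i, lipschitz_grad L (g i)) ->
  proper_fun h -> closed_fun h -> convex_efun h ->
  (* xstar minimises F = f + h *)
  (forall x, ele (eadd (EFin (favg fs xstar)) (h xstar)) (eadd (EFin (favg fs x)) (h x))) ->
  forall k : nat,
    expect_k k (fun js => nsq (vsub (saga_run g h (/ (3 * L)) x0 js).1 xstar))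
    <= (1 - Rmin (/ (4 * INR n)) (mu / (3 * L))) ^ k *
       (nsq (vsub x0 xstar)
        + 2 * INR n / (3 * L) *
          (favg fs x0 - inner (gavg g xstar) (vsub x0 xstar) - favg fs xstar)).
Proof.
move=> Hn HL Hmu Hgrad _ Hsc Hlip Hprop Hclos Hconv Hmin k.
have HnR : 0 < INR n by apply: lt_0_INR; exact/ltP.
case: (posnP d) => Hd.
- subst d.
  have N0 : forall v : vec 0, nsq v = 0 by move=> v; rewrite /nsq /inner rsum_ord0.
  have I0 : forall u v : vec 0, inner u v = 0 by move=> u v; rewrite /inner rsum_ord0.
  have Ex : x0 = xstar by apply: vec_ext => -[].
  rewrite /expect_k /rsum (eq_bigr (fun _ => 0)); last by move=> js _; rewrite N0.
  have := rsum_zero (k.-tuple (ordinal n)); rewrite /rsum => ->.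
  rewrite N0 I0 Ex Rmult_0_r.
  have -> : favg fs xstar - 0 - favg fs xstar = 0 by ring.
  rewrite Rmult_0_r Rplus_0_r Rmult_0_r; lra.
- have Hmul : mu <= L.
    move: fs g h x0 xstar Hgrad Hsc Hlip Hprop Hclos Hconv Hmin.
    case: d Hd => [//|d'] _ fs g h x0 xstar Hgrad Hsc Hlip *.
    pose i0 : 'I_n := Ordinal Hn.
    exact: (mu_le_L (Hgrad i0) (Hsc i0) (Hlip i0)).
  exact: (saga_bound HnR HL Hmu Hmul Hgrad Hsc Hlip Hprop Hclos Hconv Hmin k x0).
Qed.
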